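(* Let $G$ be a connected metrizable compact Hausdorff topological group acting on itself by left translation. Then $\mathbf{TC}_G(G)=\mathrm{cat}(G)$.
   Context: $\mathrm{cat}(X)$ denotes the (un-normalized) Lusternik–Schnirelmann category: the least $k$ such that $X$ is covered by $k$ open sets each of whose inclusions into $X$ is null-homotopic. Two $G$-maps are $G$-homotopic if there is a $G$-equivariant homotopy between them ($G$ acting trivially on $I=[0,1]$). For a $G$-map $p\colon E\to B$, $\mathrm{secat}_G(p)$ is the least $k$ such that $B$ is covered by $k$ $G$-invariant open sets $U_i$, each admitting a $G$-map $s\colon U_i\to E$ with $ps$ $G$-homotopic to the inclusion $U_i\hookrightarrow B$ ($\infty$ if none). For a $G$-space $X$, $\mathbf{TC}_G(X)=\mathrm{secat}_G(\pi)$ where $\pi\colon X^I\to X\times X$, $\pi(\gamma)=(\gamma(0),\gamma(1))$, $X^I$ has the compact-open topology and action $(g\gamma)(t)=g\gamma(t)$, and $X\times X$ has the diagonal action. *)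

(* Defs.v *)
From HB Require Import structures.
From mathcomp Require Import all_boot all_order all_algebra.
From mathcomp Require Import all_classical all_reals topology.
Set Implicit Arguments. Unset Strict Implicit. Unset Printing Implicit Defensive.
Import Order.TTheory GRing.Theory Num.Theory numFieldTopology.Exports.
Local Open Scope classical_set_scope.
Local Open Scope ring_scope.

Definition Iset (R : realType) : set R := [set x : R | 0 <= x <= 1].
Arguments Iset R : clear implicits.
Notation unitI R := (set_type (Iset R)).

Lemma zero_in_Iset (R : realType) : (0:R) \in Iset R.
Proof. by rewrite inE /Iset /= lexx ler01. Qed.
Lemma one_in_Iset (R : realType) : (1:R) \in Iset R.
Proof. by rewrite inE /Iset /= lexx ler01. Qed.
Definition I0 (R : realType) : unitI R := exist _ 0 (zero_in_Iset R).
Definition I1 (R : realType) : unitI R := exist _ 1 (one_in_Iset R).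

(* Least k satisfying P, or None (= infinity) if there is none. *)
Definition nat_inf (P : nat -> Prop) : option nat :=
  match pselect (exists n, P n) with
  | left h => Some (ex_minn (let: ex_intro n Pn := h in
                             ex_intro (fun n => `[< P n >]) n (asboolT Pn)))
  | right _ => None
  end.

Record topGroup (G : topologicalType) := TopGroup {
  gmul : G -> G -> G;
  ginv : G -> G;
  gone : G;
  gmulA : forall x y z, gmul x (gmul y z) = gmul (gmul x y) z;
  gmul1 : forall x, gmul gone x = x;
  gmulV : forall x, gmul (ginv x) x = gone;
  gmul_cont : continuous (fun p : G * G => gmul p.1 p.2);
  ginv_cont : continuous ginv
}.

Definition metrizable (R : realType) (X : topologicalType) : Prop :=
  exists d : X -> X -> R,
    [/\ forall x y, 0 <= d x y,
        forall x y, d x y = 0 <-> x = y,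
        forall x y, d x y = d y x,
        forall x y z, d x z <= d x y + d y z &
        forall (x : X) (A : set X),
          nbhs x A <-> exists2 e : R, 0 < e & [set y | d x y < e] `<=` A].

(* Lusternik-Schnirelmann category (un-normalized). *)
Definition nullhomotopic_incl (R : realType) (X : topologicalType) (U : set X) : Prop :=
  exists (c : X) (H : X * unitI R -> X),
    [/\ {within [set q | U q.1], continuous H},
        forall x, U x -> H (x, I0 R) = x &
        forall x, U x -> H (x, I1 R) = c].

Definition cat_cover (R : realType) (X : topologicalType) (k : nat) : Prop :=
  exists U : 'I_k -> set X,
    (forall x, exists i, U i x) /\
    (forall i, open (U i) /\ nullhomotopic_incl R (U i)).

Definition LScat (R : realType) (X : topologicalType) : option nat :=
  nat_inf (cat_cover R X).

Definition secat_cover (R : realType) (G : Type) (E B : topologicalType)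
  (aE : G -> E -> E) (aB : G -> B -> B) (p : E -> B) (k : nat) : Prop :=
  exists U : 'I_k -> set B,
    (forall x, exists i, U i x) /\
    (forall i,
      [/\ open (U i),
          (forall g x, U i x -> U i (aB g x)) &
          exists s : B -> E,
            [/\ {within U i, continuous s},
                (forall g x, U i x -> s (aB g x) = aE g (s x)) &
                exists H : B * unitI R -> B,
                  [/\ {within [set q | U i q.1], continuous H},
                      (forall x, U i x -> H (x, I0 R) = p (s x)),
                      (forall x, U i x -> H (x, I1 R) = x) &
                      (forall g x t, U i x -> H (aB g x, t) = aB g (H (x, t)))]]]).

Definition secatG (R : realType) (G : Type) (E B : topologicalType)
  (aE : G -> E -> E) (aB : G -> B -> B) (p : E -> B) : option nat :=
  nat_inf (secat_cover R aE aB p).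

Definition pathspace (R : realType) (X : topologicalType) : set {compact-open, unitI R -> X} :=
  [set gam | continuous gam].
Arguments pathspace R X : clear implicits.
Notation pathT R X := (set_type (pathspace R X)).

Lemma act_path_cont (R : realType) (G : Type) (X : topologicalType)
  (a : G -> X -> X) (acont : forall g, continuous (a g)) (g : G) (gam : pathT R X) :
  (fun t => a g (val gam t)) \in pathspace R X.
Proof.
rewrite inE /pathspace /=; move=> t; apply: continuous_comp; last exact: acont.
by case: gam => f /=; rewrite inE => fc; exact: fc.
Qed.

Definition act_path (R : realType) (G : Type) (X : topologicalType)
  (a : G -> X -> X) (acont : forall g, continuous (a g)) (g : G)
  (gam : pathT R X) : pathT R X :=
  exist _ (fun t => a g (val gam t)) (act_path_cont acont g gam).

Definition path_ends (R : realType) (X : topologicalType) (gam : pathT R X) : X * X :=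
  (val gam (I0 R), val gam (I1 R)).

Definition TCG (R : realType) (G : Type) (X : topologicalType)
  (a : G -> X -> X) (acont : forall g, continuous (a g)) : option nat :=
  secatG R (act_path (R:=R) acont) (fun g (p : X * X) => (a g p.1, a g p.2))
    (@path_ends R X).

Lemma left_transl_cont (G : topologicalType) (T : topGroup G) (g : G) :
  continuous (gmul T g).
Proof.
move=> x; have := @gmul_cont G T (g, x).
have -> : gmul T g = (fun p : G * G => gmul T p.1 p.2) \o (fun y => (g, y)) by [].
move=> h; apply: continuous_comp => //.
by apply: (cvg_pair (cvg_cst g)); exact: cvg_id.
Qed.

Arguments LScat R X : clear implicits.
Arguments metrizable R X : clear implicits.
Arguments TCG R {G X a} acont.

(* Main.v *)
Require Import Defs.
From HB Require Import structures.
From mathcomp Require Import all_boot all_order all_algebra.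
From mathcomp Require Import all_classical all_reals topology.
From mathcomp Require Import normedtype.

Local Open Scope classical_set_scope.

Module Aux.
Set Implicit Arguments. Unset Strict Implicit. Unset Printing Implicit Defensive.
Import Order.TTheory GRing.Theory Num.Theory numFieldTopology.Exports.
Local Open Scope classical_set_scope.
Local Open Scope ring_scope.

Section unitI.
Variable R : realType.

Lemma unitI_compact : compact [set: unitI R].
Proof.
have cI : compact (Iset R).
  have -> : Iset R = `[0, 1]%classic.
    by apply/seteqP; split => x; rewrite /Iset /= in_itv.
  exact: segment_compact.
have := @continuous_compact R (unitI R) (valL_ (I0 R) id) (Iset R).
have ct : {within Iset R, continuous (valL_ (I0 R) id)}.
  apply: (proj2 (@subspace_valL_continuousP' R (Iset R) (unitI R) (I0 R) id)).
  by move=> x; exact: cvg_id.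
move=> /(_ ct cI); congr compact; apply/seteqP; split => // x _.
exists (val x); first by case: x => x /= /set_mem.
by have := congr1 (@^~ x) (@valLK _ _ (I0 R) (Iset R) id).
Qed.

Lemma unitI_lc : locally_compact [set: unitI R].
Proof.
move=> x _; exists setT; first exact: filterT.
by split; [exact: unitI_compact | exact: closedT].
Qed.

Lemma unitI_reg : regular_space (unitI R).
Proof. exact: uniform_regular. Qed.
End unitI.

Module Paths.
Section paths.
Import ArrowAsCompactOpen.
Variables (R : realType) (X : topologicalType).

Lemma val_path_cont : continuous (fun p : pathT R X => (val p : unitI R -> X)).
Proof. exact: initial_continuous. Qed.

Lemma path_eval_cont :
  continuous (fun p : pathT R X * unitI R => val p.1 p.2).
Proof.
have := @continuous_uncurry_regular (pathT R X) (unitI R) X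
  (fun p : pathT R X => (val p : unitI R -> X)) (@unitI_lc R) (@unitI_reg R)
  val_path_cont.
move=> h; have := h (fun u => set_valP u).
by have -> : uncurry (fun p : pathT R X => (val p : unitI R -> X)) =
  (fun p : pathT R X * unitI R => val p.1 p.2) by apply/funext => -[].
Qed.

Lemma cst_in_path (x : X) : (fun _ : unitI R => x) \in pathspace R X.
Proof. apply/mem_set => t; exact: cst_continuous. Qed.

Definition cpath (x : X) : pathT R X := exist _ (fun _ => x) (cst_in_path x).

Lemma cpath_cont : continuous cpath.
Proof.
apply: continuous_comp_initial.
have cf : continuous (@fst X (unitI R)) by move=> p; exact: cvg_fst.
have := @continuous_curry_fun X (unitI R) X fst cf.
move=> h x; have := h x.
by move=> hx; exact: hx.
Qed.
End paths.
End Paths.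
Import Paths.

Section flip.
Variable R : realType.
Lemma flip_in (t : unitI R) : (1 - val t) \in Iset R.
Proof.
case: t => x /= /set_mem /andP [x0 x1]; apply/mem_set; rewrite /Iset /=.
by apply/andP; split; [rewrite subr_ge0 | rewrite lerBlDr lerDl].
Qed.
Definition flip (t : unitI R) : unitI R := exist _ (1 - val t) (flip_in t).

Lemma flip_cont : continuous flip.
Proof.
apply: continuous_comp_initial => t.
have h : {for set_val t, continuous (fun y : R => 1 - y)}.
  by apply: (@cvgB _ R^o); [exact: cvg_cst| exact: cvg_id].
exact: (continuous_comp (@initial_continuous _ _ set_val t) h).
Qed.

Lemma flipI0 : flip (I0 R) = I1 R.
Proof. by apply: val_inj; rewrite /= subr0. Qed.
Lemma flipI1 : flip (I1 R) = I0 R.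
Proof. by apply: val_inj; rewrite /= subrr. Qed.
End flip.

Section group.
Variables (G : topologicalType) (T : topGroup G).
Local Notation m := (gmul T).
Local Notation iv := (ginv T).
Local Notation e := (gone T).

Lemma mulgV' x : m x (iv x) = e.
Proof.
set y := iv x.
rewrite -[m x y](gmul1 T) -(gmulV T y) -gmulA (gmulA T y x y) /y (gmulV T x).
by rewrite gmul1 gmulV.
Qed.

Lemma mulg1' x : m x e = x.
Proof. by rewrite -(gmulV T x) gmulA mulgV' gmul1. Qed.

Lemma linv_uniq a b : m a b = e -> a = iv b.
Proof.
by move=> h; rewrite -[a]mulg1' -(mulgV' b) gmulA h gmul1.
Qed.

Lemma inv_mul x y : iv (m x y) = m (iv y) (iv x).
Proof.
apply/esym/linv_uniq.
by rewrite -gmulA (gmulA T (iv x)) gmulV gmul1 gmulV.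
Qed.

Lemma inv1 : iv e = e.
Proof. by apply/esym/linv_uniq; rewrite gmul1. Qed.

Lemma inv_transl g x y : m (iv (m g x)) (m g y) = m (iv x) y.
Proof. by rewrite inv_mul -gmulA (gmulA T (iv g)) gmulV gmul1. Qed.

Lemma cont_mul2 (Y : topologicalType) (f g : Y -> G) y :
  {for y, continuous f} -> {for y, continuous g} ->
  {for y, continuous (fun z => m (f z) (g z))}.
Proof.
move=> cf cg.
apply: (@continuous_comp _ _ _ (fun z => (f z, g z)) (fun p => m p.1 p.2)).
  exact: cvg_pair.
exact: gmul_cont.
Qed.

Lemma cont_inv (Y : topologicalType) (f : Y -> G) y :
  {for y, continuous f} -> {for y, continuous (fun z => iv (f z))}.
Proof.
move=> cf; apply: (@continuous_comp _ _ _ f iv) => //; exact: ginv_cont.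
Qed.
End group.

Lemma cfst (A B : topologicalType) : continuous (@fst A B).
Proof. by move=> p; exact: cvg_fst. Qed.
Lemma csnd (A B : topologicalType) : continuous (@snd A B).
Proof. by move=> p; exact: cvg_snd. Qed.

Lemma open_fst (A B : topologicalType) (U : set A) :
  open U -> open [set q : A * B | U q.1].
Proof.
move=> oU; have -> : [set q : A * B | U q.1] = fst @^-1` U by [].
by apply: open_comp => // q _; exact: cfst.
Qed.

Lemma within_open_at (A B : topologicalType) (U : set A) (f : A -> B) x :
  open U -> {within U, continuous f} -> U x -> {for x, continuous f}.
Proof.
move=> oU; rewrite continuous_open_subspace // => h Ux; apply: h.
exact/mem_set.
Qed.

Lemma cont_pair (Y A B : topologicalType) (f : Y -> A) (g : Y -> B) y :
  {for y, continuous f} -> {for y, continuous g} ->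
  {for y, continuous (fun z => (f z, g z))}.
Proof. by move=> cf cg; exact: cvg_pair. Qed.

Section partA.
Variables (R : realType) (G : topologicalType) (T : topGroup G).
Local Notation m := (gmul T).
Local Notation iv := (ginv T).
Local Notation e := (gone T).

Lemma partA (U : set G) (c : G) (H : G * unitI R -> G) :
  open U -> {within [set q | U q.1], continuous H} ->
  (forall x, U x -> H (x, I0 R) = x) -> (forall x, U x -> H (x, I1 R) = c) ->
  let W := [set q : G * G | U (m (m (iv q.1) q.2) c)] in
  [/\ open W, (forall g x, W x -> W ((m g x.1, m g x.2))) &
     exists s : G * G -> pathT R G,
       [/\ {within W, continuous s},
           (forall g x, W x -> s (m g x.1, m g x.2) =
              act_path (R:=R) (@left_transl_cont G T) g (s x)) &
           exists H' : (G * G) * unitI R -> G * G,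
             [/\ {within [set q | W q.1], continuous H'},
                 (forall x, W x -> H' (x, I0 R) = path_ends (s x)),
                 (forall x, W x -> H' (x, I1 R) = x) &
                 (forall g x t, W x -> H' ((m g x.1, m g x.2), t) =
                    (m g (H' (x, t)).1, m g (H' (x, t)).2))]]].
Proof.
move=> oU cH H0 H1 W.
pose u (q : G * G) := m (m (iv q.1) q.2) c.
have cu : continuous u.
  move=> q; apply: (@cont_mul2 G T _ (fun q : G * G => m (iv q.1) q.2) (fun=> c)); last exact: cvg_cst.
  apply: (@cont_mul2 G T _ (fun q : G * G => iv q.1) snd); last exact: csnd.
  by apply: cont_inv; exact: cfst.
have oW : open W.
  have -> : W = u @^-1` U by [].
  by apply: open_comp => // q _; exact: cu.
have uinv g x : u (m g x.1, m g x.2) = u x by rewrite /u /= inv_transl.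
split => //.
  by move=> g x; have := uinv g x; rewrite /u /W /= => ->.
exists (fun q => cpath R q.1); split.
- apply: continuous_subspaceT => q.
  exact: (continuous_comp (@cfst G G q) (@cpath_cont R G q.1)).
- by move=> g x _; apply: val_inj.
pose H' (p : (G * G) * unitI R) :=
  (p.1.1, m p.1.1 (m (H (u p.1, flip p.2)) (iv c))).
exists H'; split.
- rewrite continuous_open_subspace; last exact: open_fst.
  move=> p /set_mem Wp.
  have cf1 : {for p, continuous (fun p : (G * G) * unitI R => p.1.1)}.
    exact: (continuous_comp (@cfst _ _ p) (@cfst _ _ p.1)).
  apply: (@cont_pair _ _ _ (fun p : (G * G) * unitI R => p.1.1)
     (fun p => m p.1.1 (m (H (u p.1, flip p.2)) (iv c)))) => //.
  apply: (@cont_mul2 G T _ (fun p : (G * G) * unitI R => p.1.1)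
     (fun p => m (H (u p.1, flip p.2)) (iv c))) => //.
  apply: (@cont_mul2 G T _ (fun p : (G * G) * unitI R => H (u p.1, flip p.2))
     (fun=> iv c)); last exact: cvg_cst.
  apply: (@continuous_comp _ _ _ (fun p : (G * G) * unitI R => (u p.1, flip p.2)) H).
    apply: (@cont_pair _ _ _ (fun p : (G * G) * unitI R => u p.1)
      (fun p : (G * G) * unitI R => flip p.2)).
      exact: (continuous_comp (@cfst _ _ p) (cu p.1)).
    exact: (continuous_comp (@csnd _ _ p) (@flip_cont R p.2)).
  have := (within_open_at (@open_fst G (unitI R) U oU) cH).
  by move=> h; apply: h; exact: Wp.
- move=> x Wx; rewrite /H' /= flipI0 H1 // mulgV' mulg1'.
  by rewrite /path_ends; reflexivity.
- move=> x Wx; rewrite /H' /= flipI1 H0 // /u -gmulA mulgV' mulg1'.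
  by rewrite gmulA mulgV' gmul1; case: x Wx.
- move=> g x t Wx; rewrite /H' /= uinv.
  by rewrite (gmulA T g).
Qed.
End partA.

Section partB.
Variables (R : realType) (G : topologicalType) (T : topGroup G).
Local Notation m := (gmul T).
Local Notation iv := (ginv T).
Local Notation e := (gone T).

Lemma partB (W : set (G * G)) (s : G * G -> pathT R G)
    (H : (G * G) * unitI R -> G * G) :
  open W -> {within W, continuous s} -> {within [set q | W q.1], continuous H} ->
  (forall x, W x -> H (x, I0 R) = path_ends (s x)) ->
  (forall x, W x -> H (x, I1 R) = x) ->
  open [set v | W (e, v)] /\ nullhomotopic_incl R [set v | W (e, v)].
Proof.
move=> oW cs cH H0 H1.
have ce : continuous (fun v : G => (e, v)).
  move=> v; apply: (@cont_pair _ _ _ (fun=> e) id); first exact: cvg_cst.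
  exact: cvg_id.
have oV : open [set v | W (e, v)].
  have -> : [set v | W (e, v)] = (fun v : G => (e, v)) @^-1` W by [].
  by apply: open_comp => // v _; exact: ce.
split => //.
pose hk (p : G * unitI R) := H ((e, p.1), flip p.2).
pose D (p : G * unitI R) := m (iv (hk p).1) (hk p).2.
pose E (p : G * unitI R) := m (iv (val (s (e, p.1)) (I0 R))) (val (s (e, p.1)) p.2).
exists e, (fun p => m (D p) (iv (E p))); split.
- rewrite continuous_open_subspace; last exact: (@open_fst G (unitI R) _ oV).
  move=> p /set_mem Wp.
  have chk : {for p, continuous hk}.
    apply: (@continuous_comp _ _ _ (fun p : G * unitI R => ((e, p.1), flip p.2)) H).
      apply: (@cont_pair _ _ _ (fun p : G * unitI R => (e, p.1))
        (fun p : G * unitI R => flip p.2)).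
        exact: (continuous_comp (@cfst _ _ p) (ce p.1)).
      exact: (continuous_comp (@csnd _ _ p) (@flip_cont R p.2)).
    have := (within_open_at (@open_fst (G * G)%type (unitI R) W oW) cH).
    by move=> h; apply: h; exact: Wp.
  have chs : {for p, continuous (fun p : G * unitI R => s (e, p.1))}.
    apply: (continuous_comp (continuous_comp (@cfst _ _ p) (ce p.1))).
    have := (within_open_at oW cs).
    by move=> h; apply: h; exact: Wp.
  have cev (f : G * unitI R -> unitI R) : {for p, continuous f} ->
      {for p, continuous (fun p : G * unitI R => val (s (e, p.1)) (f p))}.
    move=> cf.
    apply: (@continuous_comp _ _ _ (fun p : G * unitI R => (s (e, p.1), f p))
      (fun q : pathT R G * unitI R => val q.1 q.2)).
      exact: (@cont_pair _ _ _ (fun p : G * unitI R => s (e, p.1)) f).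
    exact: path_eval_cont.
  apply: (@cont_mul2 G T _ D (fun p => iv (E p))).
    apply: (@cont_mul2 G T _ (fun p => iv (hk p).1) (fun p => (hk p).2)).
      apply: (@cont_inv G T _ (fun p => (hk p).1)).
      exact: (continuous_comp chk (@cfst _ _ _)).
    exact: (continuous_comp chk (@csnd _ _ _)).
  apply: (@cont_inv G T _ E).
  apply: (@cont_mul2 G T _ (fun p => iv (val (s (e, p.1)) (I0 R)))
     (fun p => val (s (e, p.1)) p.2)).
    apply: (@cont_inv G T _ (fun p => val (s (e, p.1)) (I0 R))).
    by apply: (cev (fun=> I0 R)); exact: cvg_cst.
  by apply: cev; exact: csnd.
- move=> v Wv; rewrite /D /E /hk /= flipI0 H1 //= inv1 gmul1.
  by rewrite gmulV inv1 mulg1'.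
- move=> v Wv; rewrite /D /E /hk /= flipI1 H0 //= /path_ends /=.
  exact: mulgV'.
Qed.
End partB.

Section pathconn.
Variables (R : realType) (G : topologicalType) (T : topGroup G).
Local Notation m := (gmul T).
Local Notation iv := (ginv T).
Local Notation e := (gone T).

Definition conn (a b : G) := exists rho : unitI R -> G,
  [/\ continuous rho, rho (I0 R) = a & rho (I1 R) = b].

Lemma conn_sym a b : conn a b -> conn b a.
Proof.
move=> [rho [crho r0 r1]]; exists (rho \o @flip R); split.
- by move=> t; apply: continuous_comp; [exact: flip_cont | exact: crho].
- by rewrite /= flipI0.
- by rewrite /= flipI1.
Qed.

Lemma conn_trans a b c : conn a b -> conn b c -> conn a c.
Proof.
move=> [al [cal a0 a1]] [be [cbe b0 b1]].
exists (fun t => m (m (al t) (iv b)) (be t)); split.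
- move=> t; apply: (@cont_mul2 G T _ (fun t => m (al t) (iv b)) be); last exact: cbe.
  apply: (@cont_mul2 G T (unitI R) al (fun _ : unitI R => iv b) t); [exact: cal | exact: cst_continuous].
- by rewrite a0 b0 -gmulA gmulV mulg1'.
- by rewrite a1 b1 mulgV' gmul1.
Qed.

Lemma null_conn (U : set G) : open U -> nullhomotopic_incl R U ->
  forall y z, U y -> U z -> conn y z.
Proof.
move=> oU [c [H [cH H0 H1]]].
have toc y : U y -> conn y c.
  move=> Uy; exists (fun t => H (y, t)); split.
  - move=> t; apply: (@continuous_comp _ _ _ (fun t : unitI R => (y, t)) H).
      apply: (@cont_pair _ _ _ (fun=> y) id); [exact: cst_continuous | exact: cvg_id].
    have := within_open_at (@open_fst G (unitI R) U oU) cH.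
    by move=> h; apply: h; exact: Uy.
  - exact: H0.
  - exact: H1.
by move=> y z Uy Uz; apply: (conn_trans (toc y Uy)); apply: conn_sym; exact: toc.
Qed.

Lemma cover_conn k (U : 'I_k -> set G) :
  connected [set: G] -> (forall x, exists i, U i x) ->
  (forall i, open (U i) /\ nullhomotopic_incl R (U i)) -> forall x, conn x e.
Proof.
move=> cG cov hU.
pose P := [set x | conn x e].
have same i y z : U i y -> U i z -> conn y z.
  by have [oU nU] := hU i; exact: null_conn.
have oP : open P.
  rewrite openE => x Px; have [i Ui] := cov x.
  have [oU _] := hU i.
  apply: (@filterS _ _ _ (U i)); last exact: open_nbhs_nbhs.
  by move=> y Uy; apply: (conn_trans (same i y x Uy Ui)).
have oCP : open (~` P).
  rewrite openE => x nPx; have [i Ui] := cov x.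
  have [oU _] := hU i.
  apply: (@filterS _ _ _ (U i)); last exact: open_nbhs_nbhs.
  by move=> y Uy Py; apply: nPx; apply: (conn_trans (same i x y Ui Uy)).
have PT : P = [set: G].
  apply: cG.
  - exists e; exists (fun=> e); split => //; exact: cst_continuous.
  - by exists P => //; rewrite setTI.
  - exists P; last by rewrite setTI.
    by rewrite -[P]setCK; exact: open_closedC.
by move=> x; have : P x by rewrite PT.
Qed.
End pathconn.

Section main.
Variables (R : realType) (G : topologicalType) (T : topGroup G).
Local Notation m := (gmul T).
Local Notation iv := (ginv T).
Local Notation e := (gone T).

Lemma contract_e (U : set G) : open U -> nullhomotopic_incl R U ->
  (forall x, @conn R G x e) ->
  exists H : G * unitI R -> G,
    [/\ {within [set q | U q.1], continuous H},
        forall x, U x -> H (x, I0 R) = x &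
        forall x, U x -> H (x, I1 R) = e].
Proof.
move=> oU [c [H [cH H0 H1]]] allc.
have [rho [cr r0 r1]] := allc c.
exists (fun p => m (H p) (m (iv c) (rho p.2))); split.
- rewrite continuous_open_subspace; last exact: (@open_fst G (unitI R) _ oU).
  move=> p /set_mem Up.
  apply: (@cont_mul2 G T _ H (fun p : G * unitI R => m (iv c) (rho p.2))).
    have := within_open_at (@open_fst G (unitI R) U oU) cH.
    by move=> h; apply: h; exact: Up.
  apply: (@cont_mul2 G T _ (fun _ : G * unitI R => iv c) (fun p => rho p.2)).
    exact: cst_continuous.
  exact: (continuous_comp (@csnd _ _ p) (cr p.2)).
- by move=> x Ux; rewrite /= r0 gmulV mulg1' H0.
- by move=> x Ux; rewrite /= r1 mulg1' H1 // mulgV'.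
Qed.
End main.

Theorem theorem5p11' (R : realType) (G : topologicalType) (T : topGroup G) :
  connected [set: G] -> metrizable R G -> compact [set: G] -> hausdorff_space G ->
  TCG R (@left_transl_cont G T) = LScat R G.
Proof.
move=> cG _ _ _.
rewrite /TCG /secatG /LScat; congr nat_inf.
apply/funext => k; apply/propext; split.
- move=> [W [cov hW]].
  exists (fun i => [set v | W i (gone T, v)]); split.
    by move=> x; have [i Wi] := cov (gone T, x); exists i.
  move=> i; have [oW _ [s [cs _ [H [cH H0 H1 _]]]]] := hW i.
  exact: (@partB R G T (W i) s H oW cs cH H0 H1).
- move=> [U [cov hU]].
  have allc := @cover_conn R G T k U cG cov hU.
  have hi : forall i, exists H : G * unitI R -> G,
    [/\ {within [set q | U i q.1], continuous H},
        forall x, U i x -> H (x, I0 R) = x &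
        forall x, U i x -> H (x, I1 R) = gone T].
    by move=> i; have [oU nU] := hU i; exact: contract_e.
  have [Hs hHs] := choice hi.
  exists (fun i => [set q : G * G | U i (gmul T (gmul T (ginv T q.1) q.2) (gone T))]).
  split.
    by move=> q; have [i Ui] := cov (gmul T (gmul T (ginv T q.1) q.2) (gone T)); exists i.
  move=> i; have [cHi H0 H1] := hHs i.
  exact: (@partA R G T (U i) (gone T) (Hs i) (hU i).1 cHi H0 H1).
Qed.

End Aux.

Theorem theorem5p11 (R : realType) (G : topologicalType) (T : topGroup G) :
  connected [set: G] -> metrizable R G -> compact [set: G] -> hausdorff_space G ->
  TCG R (@left_transl_cont G T) = LScat R G.
Proof. exact: Aux.theorem5p11'. Qed.
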